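(* If a partial coloring of an $n\times n$ square $A$ uniquely extends to $L(n,2n-2)$, then there are no rows $i_1\neq i_2$ and columns $j_1\neq j_2$ such that all four entries $(i_1,j_1),(i_1,j_2),(i_2,j_1),(i_2,j_2)$ are uncolored.
   Context: For positive integers $n,k$, let $\mathcal{L}_{n,k}$ be the set of $n\times n$ squares all of whose entries are colored with colors from a fixed set of $k$ colors $\{1,\dots,k\}$ such that any two entries in the same row, or in the same column, have different colors. Entries are indexed $(i,j)$, $i$ the row and $j$ the column. A partial coloring of an $n\times n$ square assigns colors from $\{1,\dots,k\}$ to some of its entries; the remaining entries are called uncolored. A partial coloring extends to $L(n,k)$ if the uncolored entries can be colored so that the resulting fully colored square lies in $\mathcal{L}_{n,k}$ (keeping the given colors), and it uniquely extends to $L(n,k)$ if there is exactly one such way. *)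

(* Defs.v *)
From mathcomp Require Import all_boot.
Set Implicit Arguments. Unset Strict Implicit. Unset Printing Implicit Defensive.

(* Colors {1,...,k} are represented by 'I_k (i.e. {0,...,k-1}). *)
Definition square (n k : nat) := 'I_n -> 'I_n -> 'I_k.

Definition in_L (n k : nat) (L : square n k) : Prop :=
  (forall i j1 j2, j1 <> j2 -> L i j1 <> L i j2) /\
  (forall i1 i2 j, i1 <> i2 -> L i1 j <> L i2 j).

(* A partial coloring: None = uncolored. *)
Definition partial (n k : nat) := 'I_n -> 'I_n -> option 'I_k.

Definition extends_to (n k : nat) (P : partial n k) (L : square n k) : Prop :=
  in_L L /\ forall i j c, P i j = Some c -> L i j = c.

Definition extends (n k : nat) (P : partial n k) : Prop :=
  exists L : square n k, extends_to P L.

Definition uniquely_extends (n k : nat) (P : partial n k) : Prop :=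
  extends P /\
  forall L1 L2 : square n k, extends_to P L1 -> extends_to P L2 ->
    forall i j, L1 i j = L2 i j.

(* Main.v *)
Require Import Defs.
From mathcomp Require Import all_boot zify.
Set Implicit Arguments. Unset Strict Implicit.

Definition good n k (L : square n k) (i1 i2 j1 j2 i j : 'I_n) (y : 'I_k) :=
  (forall j0, j0 != j1 -> j0 != j2 -> y <> L i j0) /\
  (forall i0, i0 != i1 -> i0 != i2 -> y <> L i0 j).

Lemma alt n (L : square n (2 * n - 2)) (i1 i2 j1 j2 i j : 'I_n) :
  i1 <> i2 -> j1 <> j2 ->
  exists x, x <> L i j /\ good L i1 i2 j1 j2 i j x.
Proof.
move=> hi hj.
set A := [set L i j0 | j0 in ~: [set j1; j2]].
set B := [set L i0 j | i0 in ~: [set i1; i2]].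
set S := L i j |: (A :|: B).
have cA : #|A| <= n - 2.
  apply: leq_trans (leq_imset_card _ _) _.
  have := cardsC [set j1; j2]; rewrite cards2 card_ord.
  have -> : (j1 != j2) by apply/eqP. lia.
have cB : #|B| <= n - 2.
  apply: leq_trans (leq_imset_card _ _) _.
  have := cardsC [set i1; i2]; rewrite cards2 card_ord.
  have -> : (i1 != i2) by apply/eqP. lia.
have n2 : 2 <= n.
  have := cards2 i1 i2; have -> : (i1 != i2) by apply/eqP.
  move=> h; have := max_card [set i1; i2]; rewrite h card_ord. done.
have cS : #|S| < 2 * n - 2.
  rewrite /S cardsU1. have := leq_card_setU A B. case=> h _.
  have : (L i j \notin A :|: B) <= 1 by case: (_ \notin _).
  lia.
have : 0 < #|~: S|.
  have := cardsC S; rewrite card_ord. lia.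
rewrite card_gt0 => /set0Pn [x]; rewrite in_setC => hx.
exists x; split; [|split].
- by move=> e; move: hx; rewrite /S e setU11.
- move=> j0 h1 h2 e; move: hx; rewrite /S e !in_setU.
  suff -> : L i j0 \in A by rewrite orbT.
  apply: imset_f; rewrite !inE; apply/norP; split => //.
- move=> i0 h1 h2 e; move: hx; rewrite /S e !in_setU.
  suff -> : L i0 j \in B by rewrite !orbT.
  apply: imset_f; rewrite !inE; apply/norP; split => //.
Qed.

Definition upd n k (L : square n k) (i1 i2 j1 j2 : 'I_n) (y11 y12 y21 y22 : 'I_k) : square n k :=
  fun i j => if (i == i1) || (i == i2) then
     (if (j == j1) || (j == j2) then
        (if i == i1 then (if j == j1 then y11 else y12) else (if j == j1 then y21 else y22))
      else L i j) else L i j.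

Lemma upd_inL n k (L : square n k) (i1 i2 j1 j2 : 'I_n) y11 y12 y21 y22 :
  in_L L -> i1 <> i2 -> j1 <> j2 ->
  good L i1 i2 j1 j2 i1 j1 y11 -> good L i1 i2 j1 j2 i1 j2 y12 ->
  good L i1 i2 j1 j2 i2 j1 y21 -> good L i1 i2 j1 j2 i2 j2 y22 ->
  y11 <> y12 -> y21 <> y22 -> y11 <> y21 -> y12 <> y22 ->
  in_L (upd L i1 i2 j1 j2 y11 y12 y21 y22).
Proof.
move=> [HR HC] hi hj [g11r g11c] [g12r g12c] [g21r g21c] [g22r g22c] e1 e2 e3 e4.
have hi' : (i2 == i1) = false by apply/eqP; move=> e; apply: hi.
have hj' : (j2 == j1) = false by apply/eqP; move=> e; apply: hj.
rewrite /upd; split.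
- move=> i ja jb.
  case: (eqVneq i i1) => [->|n1]; rewrite ?eqxx /=;
  [|case: (eqVneq i i2) => [->|n2]; rewrite ?eqxx ?hi' /=]; try (by apply: HR);
  (case: (eqVneq ja j1) => [->|a1]; [|case: (eqVneq ja j2) => [->|a2]]);
  (case: (eqVneq jb j1) => [->|b1]; [|case: (eqVneq jb j2) => [->|b2]]);
  move=> hab; rewrite ?eqxx ?hj' ?orbT /=; rewrite ?(negbTE a1) ?(negbTE a2) ?(negbTE b1) ?(negbTE b2) /=;
  try done; try (by exfalso; apply: hab); try (by apply: HR); try (by apply/nesym);
  try (by apply: g11r); try (by apply: g12r); try (by apply: g21r); try (by apply: g22r);
  try (by apply/nesym; apply: g11r); try (by apply/nesym; apply: g12r);
  try (by apply/nesym; apply: g21r); try (by apply/nesym; apply: g22r).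
- move=> ia ib j.
  case: (eqVneq j j1) => [->|n1]; rewrite ?eqxx /=;
  [|case: (eqVneq j j2) => [->|n2]; rewrite ?eqxx ?hj' /=];
  (case: (eqVneq ia i1) => [->|a1]; [|case: (eqVneq ia i2) => [->|a2]]);
  (case: (eqVneq ib i1) => [->|b1]; [|case: (eqVneq ib i2) => [->|b2]]);
  move=> hab; rewrite ?eqxx ?hi' ?orbT /=; rewrite ?(negbTE a1) ?(negbTE a2) ?(negbTE b1) ?(negbTE b2) ?(negbTE n1) ?(negbTE n2) /=;
  try done; try (by exfalso; apply: hab); try (by apply: HC); try (by apply/nesym);
  try (by apply: g11c); try (by apply: g12c); try (by apply: g21c); try (by apply: g22c);
  try (by apply/nesym; apply: g11c); try (by apply/nesym; apply: g12c);
  try (by apply/nesym; apply: g21c); try (by apply/nesym; apply: g22c).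
Qed.

Lemma upd_ext n k (P : partial n k) (L : square n k) (i1 i2 j1 j2 : 'I_n) y11 y12 y21 y22 :
  extends_to P L -> P i1 j1 = None -> P i1 j2 = None -> P i2 j1 = None -> P i2 j2 = None ->
  in_L (upd L i1 i2 j1 j2 y11 y12 y21 y22) ->
  extends_to P (upd L i1 i2 j1 j2 y11 y12 y21 y22).
Proof.
move=> [_ HP] p11 p12 p21 p22 HL; split => // i j c.
rewrite /upd.
case: (eqVneq i i1) => [->|n1]; [|case: (eqVneq i i2) => [->|n2]];
(case: (eqVneq j j1) => [->|m1]; [|case: (eqVneq j j2) => [->|m2]]);
rewrite ?eqxx ?orbT ?p11 ?p12 ?p21 ?p22 //=;
rewrite ?(negbTE n1) ?(negbTE n2) ?(negbTE m1) ?(negbTE m2) /=; exact: HP.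
Qed.

Lemma good_orig n k (L : square n k) (i1 i2 j1 j2 i j : 'I_n) :
  in_L L -> (i = i1 \/ i = i2) -> (j = j1 \/ j = j2) -> good L i1 i2 j1 j2 i j (L i j).
Proof.
move=> [HR HC] hi hj; split.
- move=> j0 h1 h2; apply: HR => e; subst j0; case: hj => e; subst j.
  by rewrite eqxx in h1. by rewrite eqxx in h2.
- move=> i0 h1 h2; apply: HC => e; subst i0; case: hi => e; subst i.
  by rewrite eqxx in h1. by rewrite eqxx in h2.
Qed.

Theorem lemma2 (n : nat) (P : partial n (2 * n - 2)) :
  uniquely_extends P ->
  ~ (exists (i1 i2 j1 j2 : 'I_n), i1 <> i2 /\ j1 <> j2 /\
       P i1 j1 = None /\ P i1 j2 = None /\ P i2 j1 = None /\ P i2 j2 = None).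
Proof.
move=> [[L HL] Hu] [i1 [i2 [j1 [j2 [hi [hj [p11 [p12 [p21 p22]]]]]]]]].
have HLL := HL.1.
have forced : forall y11 y12 y21 y22,
  good L i1 i2 j1 j2 i1 j1 y11 -> good L i1 i2 j1 j2 i1 j2 y12 ->
  good L i1 i2 j1 j2 i2 j1 y21 -> good L i1 i2 j1 j2 i2 j2 y22 ->
  y11 <> y12 -> y21 <> y22 -> y11 <> y21 -> y12 <> y22 ->
  [/\ y11 = L i1 j1, y12 = L i1 j2, y21 = L i2 j1 & y22 = L i2 j2].
  move=> y11 y12 y21 y22 g1 g2 g3 g4 e1 e2 e3 e4.
  have HI := upd_inL HLL hi hj g1 g2 g3 g4 e1 e2 e3 e4.
  have HE := upd_ext HL p11 p12 p21 p22 HI.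
  have hi' : (i2 == i1) = false by apply/eqP; move=> e; apply: hi.
  have hj' : (j2 == j1) = false by apply/eqP; move=> e; apply: hj.
  have := Hu _ _ HE HL; rewrite /upd => H.
  split.
  - by have := H i1 j1; rewrite !eqxx.
  - by have := H i1 j2; rewrite !eqxx hj' orbT.
  - by have := H i2 j1; rewrite !eqxx hi' orbT.
  - by have := H i2 j2; rewrite !eqxx hi' hj' !orbT.
set a := L i1 j1; set b := L i1 j2; set c := L i2 j1; set d := L i2 j2.
have ga : good L i1 i2 j1 j2 i1 j1 a by apply: good_orig; auto.
have gb : good L i1 i2 j1 j2 i1 j2 b by apply: good_orig; auto.
have gc : good L i1 i2 j1 j2 i2 j1 c by apply: good_orig; auto.
have gd : good L i1 i2 j1 j2 i2 j2 d by apply: good_orig; auto.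
have hab : a <> b by apply: HLL.1.
have hcd : c <> d by apply: HLL.1.
have hac : a <> c by apply: HLL.2.
have hbd : b <> d by apply: HLL.2.
have hba := nesym hab. have hdc := nesym hcd. have hca := nesym hac. have hdb := nesym hbd.
have [x1 [n1 g1]] := @alt _ L i1 i2 j1 j2 i1 j1 hi hj.
have [x2 [n2 g2]] := @alt _ L i1 i2 j1 j2 i1 j2 hi hj.
have [x3 [n3 g3]] := @alt _ L i1 i2 j1 j2 i2 j1 hi hj.
have [x4 [n4 g4]] := @alt _ L i1 i2 j1 j2 i2 j2 hi hj.
have c1 : x1 = b \/ x1 = c.
  case: (eqVneq x1 b) => [|h1]; first by left.
  case: (eqVneq x1 c) => [|h2]; first by right.
  have [] := forced x1 b c d g1 gb gc gd (elimN eqP h1) hcd (elimN eqP h2) hbd. by [].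
have c2 : x2 = a \/ x2 = d.
  case: (eqVneq x2 a) => [|h1]; first by left.
  case: (eqVneq x2 d) => [|h2]; first by right.
  have [] := forced a x2 c d ga g2 gc gd (nesym (elimN eqP h1)) hcd hac (elimN eqP h2). by [].
have c3 : x3 = a \/ x3 = d.
  case: (eqVneq x3 a) => [|h1]; first by left.
  case: (eqVneq x3 d) => [|h2]; first by right.
  have [] := forced a b x3 d ga gb g3 gd hab (elimN eqP h2) (nesym (elimN eqP h1)) hbd. by [].
have c4 : x4 = b \/ x4 = c.
  case: (eqVneq x4 b) => [|h1]; first by left.
  case: (eqVneq x4 c) => [|h2]; first by right.
  have [] := forced a b c x4 ga gb gc g4 hab (nesym (elimN eqP h2)) hac (nesym (elimN eqP h1)). by [].
have e1 : x1 <> x2 by case: c1 => ->; case: c2 => ->.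
have e2 : x3 <> x4 by case: c3 => ->; case: c4 => ->.
have e3 : x1 <> x3 by case: c1 => ->; case: c3 => ->.
have e4 : x2 <> x4 by case: c2 => ->; case: c4 => ->.
by have [] := forced x1 x2 x3 x4 g1 g2 g3 g4 e1 e2 e3 e4.
Qed.
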